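(* Let $\Gamma$ be a finitely generated discrete group with finite symmetric generating set $Q$, let $Z\subseteq \mathrm{Sub}(\Gamma)$ be a uniformly recurrent subgroup of $\Gamma$, and let $H\in Z$. Then the groupoid $\mathcal{G}_H$ (defined in the context), equipped with its operations and topology, is an ample, minimal, Hausdorff, étale topological groupoid whose unit space $\mathcal{G}_H^0$ is homeomorphic to $Z$ (with the subspace topology from $\mathrm{Sub}(\Gamma)$).
   Context: Word length $l(\gamma)$ is taken with respect to $Q$. $\mathrm{Sub}(\Gamma)$ is the space of subgroups of $\Gamma$ with the topology of pointwise convergence of indicator functions, with $\Gamma$ acting by conjugation $\gamma.H=\gamma H\gamma^{-1}$. A uniformly recurrent subgroup (URS) is a nonempty closed $\Gamma$-invariant subset $Z\subseteq\mathrm{Sub}(\Gamma)$ on which every $\Gamma$-orbit is dense. For $H\le\Gamma$, the Schreier graph $S(H)=S_\Gamma^Q(H)$ is the rooted labeled graph with vertex set $\Gamma/H$, root $H$, and for each $\gamma H\in\Gamma/H$ and $q\in Q$ an edge from $\gamma H$ to $q\gamma H$ labeled $q$; $d$ is the shortest-path metric and $B_n(S,p)$ the ball of radius $n$ around a vertex $p$. Two rooted labeled balls are root-label isomorphic if there is a graph isomorphism between them preserving roots and labels (such an isomorphism is unique). Construction of $\mathcal{G}_H$: write $S=S(H)$. For $p\in\Gamma/H$ and $n\ge 0$ let $[p]_n$ be the root-label isomorphism class of the rooted labeled ball $(B_n(S,p),p)$, and let $E_n=\{[p]_n: p\in\Gamma/H\}$ (a finite discrete set), with maps $E_{n+1}\to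 E_n$, $[p]_{n+1}\mapsto[p]_n$. Let $\mathcal{G}_H^0=\varprojlim E_n$. For $x=(x_n)\in\mathcal{G}_H^0$ choose vertices $p_n\in\Gamma/H$ with $x_n=[p_n]_n$. The arrows of $\mathcal{G}_H$ are equivalence classes of pairs $(x,\gamma)$ with $x\in\mathcal{G}_H^0$, $\gamma\in\Gamma$, where $(x,\gamma)\sim(x,\gamma')$ iff $\gamma p_n=\gamma' p_n$ for all sufficiently large $n$ (this does not depend on the choices of $p_n$). Range $r(x,\gamma)=x$; source $s(x,\gamma)=\gamma.x$, where $(\gamma.x)_n=[\gamma p_{n+l(\gamma)}]_n$; product $(x,\gamma')(\gamma'.x,\gamma)=(x,\gamma\gamma')$; inverse $(x,\gamma)^{-1}=(\gamma.x,\gamma^{-1})$; units are $(x,e)$, identified with $x\in\mathcal{G}_H^0$. The topology on $\mathcal{G}_H$ is generated by the sets $U_{c,\gamma}=\{(x,\gamma): x_N=c\}$ for $N\in\mathbb{N}$, $c\in E_N$, $\gamma\in\Gamma$ with $l(\gamma)\le N$. Ample means étale with totally disconnected unit space; minimal means every orbit in the unit space is dense. *)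

(* Defs.v *)
From HB Require Import structures.
From mathcomp Require Import all_boot all_classical.
From mathcomp Require Import topology.
From Stdlib Require Import ClassicalEpsilon.

Unset Printing Implicit Defensive.

Local Open Scope classical_set_scope.

Record grp := Grp {
  gcar :> Type;
  gmul : gcar -> gcar -> gcar;
  ginv : gcar -> gcar;
  gone : gcar;
  gmulA : forall x y z, gmul x (gmul y z) = gmul (gmul x y) z;
  gmul1 : forall x, gmul gone x = x;
  gmulV : forall x, gmul (ginv x) x = gone
}.

Arguments gmul {g}.
Arguments ginv {g}.

Section GroupBasics.
Variable G : grp.

Definition prodw (w : seq G) : G := foldr (@gmul G) (gone G) w.

Definition word_in (Q : set G) (w : seq G) : Prop := forall q, List.In q w -> Q q.

Definition symmetric_set (Q : set G) : Prop := forall q, Q q -> Q (ginv q).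

(* Q generates G (Q symmetric, so every element is a product of letters of Q) *)
Definition generates (Q : set G) : Prop :=
  forall g : G, exists w, word_in Q w /\ prodw w = g.

Definition has_word_len (Q : set G) (g : G) (n : nat) : Prop :=
  exists w, word_in Q w /\ size w = n /\ prodw w = g.

Definition wlen (Q : set G) (g : G) : nat :=
  epsilon (inhabits 0%N)
    (fun n => has_word_len Q g n /\ forall m, has_word_len Q g m -> (n <= m)%N).

Definition is_subgroup (H : G -> bool) : Prop :=
  H (gone G) /\ forall x y, H x -> H y -> H (gmul x (ginv y)).

(* conjugation action  g.H = g H g^-1 :  d \in g H g^-1  iff  g^-1 d g \in H *)
Definition conj_sub (g : G) (H : G -> bool) : G -> bool :=
  fun d => H (gmul (ginv g) (gmul d g)).

End GroupBasics.
Arguments prodw {G}.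
Arguments word_in {G}.
Arguments symmetric_set {G}.
Arguments generates {G}.
Arguments has_word_len {G}.
Arguments wlen {G}.
Arguments is_subgroup {G}.
Arguments conj_sub {G}.

(* The space {0,1}^Gamma with the product (pointwise convergence) topology *)
Definition Ind (G : grp) := {ptws G -> bool}.

Definition SubG (G : grp) : set (Ind G) := [set H | is_subgroup H].

Definition URS {G : grp} (Z : set (Ind G)) : Prop :=
  Z !=set0 /\
  Z `<=` @SubG G /\
  (* closed in Sub(Gamma) for the subspace topology *)
  (exists C : set (Ind G), closed C /\ Z = C `&` @SubG G) /\
  (forall (g : G) (K : Ind G), Z K -> Z (conj_sub g K)) /\
  (forall K : Ind G, Z K -> Z `<=` closure (range (fun g : G => (conj_sub g K : Ind G)))).

(* Schreier graph S(H) with vertex set G/H; a vertex gH is represented  *)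
(* by any g.  Edges: gH --q--> q g H, for q in Q.                      *)
Section Schreier.
Variables (G : grp) (Q : set G) (H : G -> bool).

(* aH = bH *)
Definition ceq (a b : G) : Prop := H (gmul (ginv a) b).

(* there is a path of length <= n from aH to bH in S(H), i.e. d(aH,bH) <= n;
   the path with successive labels q_1,...,q_k ends at q_k ... q_1 a H *)
Definition sdist_le (n : nat) (a b : G) : Prop :=
  exists w : seq G, word_in Q w /\ (size w <= n)%N /\ ceq (gmul (prodw w) a) b.

Definition inball (n : nat) (p v : G) : Prop := sdist_le n p v.

(* the rooted labeled balls (B_n(S,pH), pH) and (B_n(S,p'H), p'H) are
   root-label isomorphic: a bijection phi of the vertex sets (acting on
   representatives) sending root to root and preserving labeled edges
   (the balls are induced subgraphs). *)
Definition ball_iso (n : nat) (p p' : G) : Prop :=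
  exists phi : G -> G,
    (forall v, inball n p v -> inball n p' (phi v)) /\
    (forall v w, inball n p v -> inball n p w -> (ceq v w <-> ceq (phi v) (phi w))) /\
    (forall v', inball n p' v' -> exists v, inball n p v /\ ceq (phi v) v') /\
    ceq (phi p) p' /\
    (forall q v w, Q q -> inball n p v -> inball n p w ->
       (ceq (gmul q v) w <-> ceq (gmul q (phi v)) (phi w))).

(* [p]_n : the root-label isomorphism class of (B_n(S,pH), pH), represented
   as the set of representatives p' of vertices with isomorphic rooted ball *)
Definition bcls (n : nat) (p : G) : set G := [set p' | ball_iso n p p'].

Definition En (n : nat) : set (set G) := [set c | exists p, c = bcls n p].

End Schreier.
Arguments ceq {G}.
Arguments sdist_le {G}.
Arguments inball {G}.
Arguments ball_iso {G}.
Arguments bcls {G}.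
Arguments En {G}.

(* G_H^0 = lim E_n : compatible sequences (x_n) with x_n in E_n and
   x_{n+1} |-> x_n under [p]_{n+1} |-> [p]_n *)
Record GH0 (G : grp) (Q : set G) (H : G -> bool) := MkGH0 {
  xs : nat -> set G;
  xs_ok : forall n, exists p, xs n.+1 = bcls Q H n.+1 p /\ xs n = bcls Q H n p
}.

Arguments xs {G Q H}.
Arguments MkGH0 {G Q H}.
HB.instance Definition _ G Q H := gen_eqMixin (@GH0 G Q H).
HB.instance Definition _ G Q H := gen_choiceMixin (@GH0 G Q H).

(* inverse limit topology of the discrete spaces E_n: generated by the
   cylinders {x | x_N = c}, c in E_N *)
Definition GH0_subbase G Q H : set (set (@GH0 G Q H)) :=
  [set U | exists (N : nat) (c : set G), En Q H N c /\ U = [set x | xs x N = c]].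

HB.instance Definition _ G Q H :=
  @isSubBaseTopological.Build (@GH0 G Q H) (set (@GH0 G Q H))
    (GH0_subbase G Q H) id.

Section GH.
Variables (G : grp) (Q : set G) (H : G -> bool).

Local Notation X := (@GH0 G Q H).

Definition GH0_default : X :=
  MkGH0 (fun n => bcls Q H n (gone G))
    (fun n => ex_intro _ (gone G) (conj erefl erefl)).

Definition xrep (x : X) (n : nat) : G :=
  epsilon (inhabits (gone G)) (fun p => xs x n = bcls Q H n p).

(* packaging a sequence as an element of G_H^0 (default if not compatible) *)
Definition toGH0 (f : nat -> set G) : X :=
  match pselect (forall n, exists p, f n.+1 = bcls Q H n.+1 p /\ f n = bcls Q H n p)
  with
  | left pf => MkGH0 f pf
  | right _ => GH0_default
  end.

Definition gact (g : G) (x : X) : X :=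
  toGH0 (fun n => bcls Q H n (gmul g (xrep x (n + wlen Q g)))).

Definition arr_rel (a b : X * G) : Prop :=
  a.1 = b.1 /\
  exists N, forall n, (N <= n)%N -> ceq H (gmul a.2 (xrep a.1 n)) (gmul b.2 (xrep a.1 n)).

End GH.
Arguments GH0_default {G}.
Arguments xrep {G Q H}.
Arguments toGH0 {G}.
Arguments gact {G Q H}.
Arguments arr_rel {G Q H}.

Record GH (G : grp) (Q : set G) (H : G -> bool) := MkGH {
  aset : set (@GH0 G Q H * G);
  aset_cls : exists a, aset = arr_rel a
}.

Arguments aset {G Q H}.
Arguments MkGH {G Q H}.
HB.instance Definition _ G Q H := gen_eqMixin (@GH G Q H).
HB.instance Definition _ G Q H := gen_choiceMixin (@GH G Q H).

Definition acls {G Q H} (a : @GH0 G Q H * G) : @GH G Q H :=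
  MkGH (arr_rel a) (ex_intro _ a erefl).

Definition GH_subbase G Q H : set (set (@GH G Q H)) :=
  [set U | exists (N : nat) (c : set G) (g : G),
     En Q H N c /\ (wlen Q g <= N)%N /\
     U = [set A | exists x, A = acls (x, g) /\ xs x N = c]].

HB.instance Definition _ G Q H :=
  @isSubBaseTopological.Build (@GH G Q H) (set (@GH G Q H))
    (GH_subbase G Q H) id.

Section GHops.
Variables (G : grp) (Q : set G) (H : G -> bool).
Local Notation X := (@GH0 G Q H).
Local Notation A := (@GH G Q H).

Definition arep (g : A) : X * G :=
  epsilon (inhabits (GH0_default Q H, gone G)) (fun a => aset g = arr_rel a).

Definition GH_r (g : A) : X := (arep g).1.
Definition GH_s (g : A) : X := gact (arep g).2 (arep g).1.
Definition GH_u (x : X) : A := acls (x, gone G).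
Definition GH_inv (g : A) : A := acls (GH_s g, ginv (arep g).2).
Definition GH_mul (a b : A) : A := acls (GH_r a, gmul (arep b).2 (arep a).2).

End GHops.
Arguments arep {G Q H}.
Arguments GH_r {G Q H}.
Arguments GH_s {G Q H}.
Arguments GH_u {G Q H}.
Arguments GH_inv {G Q H}.
Arguments GH_mul {G Q H}.

Definition topological_groupoid {X Y : topologicalType}
  (r s : Y -> X) (u : X -> Y) (inv : Y -> Y) (mul : Y -> Y -> Y) : Prop :=
  (forall x, r (u x) = x /\ s (u x) = x) /\
  (forall g h, s g = r h -> r (mul g h) = r g /\ s (mul g h) = s h) /\
  (forall g h k, s g = r h -> s h = r k -> mul (mul g h) k = mul g (mul h k)) /\
  (forall g, mul (u (r g)) g = g /\ mul g (u (s g)) = g) /\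
  (forall g, r (inv g) = s g /\ s (inv g) = r g /\
             mul g (inv g) = u (r g) /\ mul (inv g) g = u (s g)) /\
  continuous r /\ continuous s /\ continuous u /\ continuous inv /\
  {within [set gh : Y * Y | s gh.1 = r gh.2], continuous (fun gh : Y * Y => mul gh.1 gh.2)}.

Definition local_homeo {X Y : topologicalType} (f : X -> Y) : Prop :=
  forall g : X, exists U : set X,
    open U /\ U g /\ open (f @` U) /\
    (forall a b, U a -> U b -> f a = f b -> a = b) /\
    {within U, continuous f} /\
    (forall V, open V -> V `<=` U -> open (f @` V)).

Definition etale_groupoid {X Y : topologicalType}
  (r s : Y -> X) (u : X -> Y) (inv : Y -> Y) (mul : Y -> Y -> Y) : Prop :=
  topological_groupoid r s u inv mul /\ local_homeo r.

Definition ample_groupoid {X Y : topologicalType}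
  (r s : Y -> X) (u : X -> Y) (inv : Y -> Y) (mul : Y -> Y -> Y) : Prop :=
  etale_groupoid r s u inv mul /\ totally_disconnected [set: X].

Definition minimal_groupoid {X Y : topologicalType} (r s : Y -> X) : Prop :=
  forall x : X, closure [set s g | g in [set g | r g = x]] = [set: X].

Definition homeomorphic_to_subspace (X Y : topologicalType) (Z : set Y) : Prop :=
  exists f : X -> Y,
    injective f /\ range f = Z /\ continuous f /\
    (forall U : set X, open U -> exists V : set Y, open V /\ f @` U = V `&` Z).

(* Main.v *)
Require Import Defs.
From HB Require Import structures.
From mathcomp Require Import all_boot all_classical.
From mathcomp Require Import topology zify.
From Stdlib Require Import ClassicalEpsilon.
Local Open Scope classical_set_scope.

Section Grp.
Variable G : grp.
Local Infix "**" := (@gmul G) (at level 40, left associativity).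
Local Notation gmulA := (@gmulA G).
Local Notation gmul1 := (@gmul1 G).
Local Notation gmulV := (@gmulV G).

Lemma mulgV (x : G) : x ** ginv x = gone G.
Proof.
have yy : (x ** ginv x) ** (x ** ginv x) = x ** ginv x.
  by rewrite -gmulA (gmulA (ginv x)) gmulV gmul1.
have := congr1 (fun z => ginv (x ** ginv x) ** z) yy.
by rewrite /= gmulA gmulV gmul1.
Qed.

Lemma mulg1 (x : G) : x ** gone G = x.
Proof. by rewrite -(gmulV x) gmulA mulgV gmul1. Qed.

Lemma invg_uniq (a b : G) : a ** b = gone G -> a = ginv b.
Proof. by move=> e; rewrite -(mulg1 a) -(mulgV b) gmulA e gmul1. Qed.

Lemma ginvK (x : G) : ginv (ginv x) = x.
Proof. by apply: esym; apply: invg_uniq; rewrite mulgV. Qed.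

Lemma ginvM (x y : G) : ginv (x ** y) = ginv y ** ginv x.
Proof.
apply: esym; apply: invg_uniq.
by rewrite -gmulA (gmulA (ginv x)) gmulV gmul1 gmulV.
Qed.

Lemma ginv1 : ginv (gone G) = gone G.
Proof. by apply: esym; apply: invg_uniq; rewrite gmul1. Qed.

Lemma mulKg (x y : G) : ginv x ** (x ** y) = y.
Proof. by rewrite gmulA gmulV gmul1. Qed.
Lemma mulVKg (x y : G) : x ** (ginv x ** y) = y.
Proof. by rewrite gmulA mulgV gmul1. Qed.
Lemma mulgK (x y : G) : (y ** x) ** ginv x = y.
Proof. by rewrite -gmulA mulgV mulg1. Qed.
Lemma mulgKV (x y : G) : (y ** ginv x) ** x = y.
Proof. by rewrite -gmulA gmulV mulg1. Qed.

Section Sub.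
Variable K : G -> bool.
Hypothesis sK : is_subgroup K.
Lemma sub1 : K (gone G). Proof. by case: sK. Qed.
Lemma subV {x} : K x -> K (ginv x).
Proof. by move=> Kx; have := sK.2 _ _ sub1 Kx; rewrite gmul1. Qed.
Lemma subVE x : K (ginv x) = K x.
Proof. by apply/idP/idP => [/subV|/subV//]; rewrite ginvK. Qed.
Lemma subM {x y} : K x -> K y -> K (x ** y).
Proof. by move=> Kx Ky; have := sK.2 _ _ Kx (subV Ky); rewrite ginvK. Qed.
Lemma subMl {x} y : K x -> K (x ** y) = K y.
Proof.
move=> Kx; apply/idP/idP => [Kxy|/(subM Kx)//].
by have := subM (subV Kx) Kxy; rewrite mulKg.
Qed.
Lemma subJ k d : K k -> K (ginv k ** (d ** k)) = K d.
Proof.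
move=> Kk; rewrite subMl ?subV //.
apply/idP/idP => [Kdk|Kd]; last exact: subM.
by have := subM Kdk (subV Kk); rewrite -gmulA mulgV mulg1.
Qed.
Lemma subC {a b} : K (ginv a ** b) -> K (ginv b ** a).
Proof. by move=> h; have := subV h; rewrite ginvM ginvK. Qed.
Lemma subT {a b c} : K (ginv a ** b) -> K (ginv b ** c) -> K (ginv a ** c).
Proof. by move=> h1 h2; have := subM h1 h2; rewrite -gmulA mulVKg. Qed.
End Sub.

Lemma conj_subgroup (K : G -> bool) g : is_subgroup K -> is_subgroup (conj_sub g K).
Proof.
move=> sK; split; first by rewrite /conj_sub gmul1 gmulV; exact: sub1.
move=> x y; rewrite /conj_sub => Kx Ky.
have := @subM K sK _ _ Kx (@subV K sK _ Ky).
by rewrite !ginvM !ginvK !gmulA mulgK.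
Qed.

End Grp.

Definition gT (G : grp) : Type := gcar G.
HB.instance Definition _ (G : grp) := gen_eqMixin (gT G).
HB.instance Definition _ (G : grp) := gen_choiceMixin (gT G).

Lemma ptws_cvg (G : grp) (F : set_system (Ind G)) (FF : Filter F) (f : Ind G) :
  (forall d, \forall g \near F, g d = f d) -> F --> f.
Proof.
move=> h; apply/cvg_sup => d U [V] [[W] oW <-] WfN WU.
change (F U); apply: (@filterS _ F FF _ U WU); apply: filterS (h d) => g gd /=.
by rewrite /= gd.
Qed.

Lemma proj_nbhs (G : grp) (K : Ind G) (d : G) : nbhs K [set f : Ind G | f d = K d].
Proof.
have := @proj_continuous (gT G) (fun _ => bool) d K.
move=> /(_ [set b | b = K d]); apply.
by rewrite nbhs_principalE; apply/principal_filterP.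
Qed.

Lemma eventually_ge (P : nat -> Prop) N : (forall n, N <= n -> P n) -> \forall n \near \oo, P n.
Proof. by move=> h; exists N. Qed.

Lemma open_GH0 G Q H (U : set (GH0 G Q H)) : open U ->
  forall x, U x -> exists A, finI_from (GH0_subbase G Q H) id A /\ A x /\ A `<=` U.
Proof.
move=> [D' sD' UE] x; rewrite -UE => -[A DA Ax]; exists A; split; [exact: sD'|split=>//].
by move=> y Ay; exists A.
Qed.

Lemma sub_open_GH0 G Q H (U : set (GH0 G Q H)) : GH0_subbase G Q H U -> open U.
Proof.
move=> hU; exists [set U]; first by move=> _ ->; exact: (@finI_from1 _ _ _ id).
by rewrite bigcup_set1.
Qed.

Lemma open_GH G Q H (U : set (GH G Q H)) : open U ->
  forall x, U x -> exists A, finI_from (GH_subbase G Q H) id A /\ A x /\ A `<=` U.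
Proof.
move=> [D' sD' UE] x; rewrite -UE => -[A DA Ax]; exists A; split; [exact: sD'|split=>//].
by move=> y Ay; exists A.
Qed.

Lemma sub_open_GH G Q H (U : set (GH G Q H)) : GH_subbase G Q H U -> open U.
Proof.
move=> hU; exists [set U]; first by move=> _ ->; exact: (@finI_from1 _ _ _ id).
by rewrite bigcup_set1.
Qed.

Lemma finI_small {T : Type} (D : set (set T)) (R : nat -> set T) (x : T) :
  (forall m n, m <= n -> R n `<=` R m) ->
  (forall i, D i -> i x -> exists M, R M `<=` i) ->
  forall A, finI_from D id A -> A x -> exists M, R M `<=` A.
Proof.
move=> mono hD A [F sF <-] Ax.
have key : forall s : seq (set T), (forall i, i \in s -> D i /\ i x) ->
    exists M, forall y, R M y -> forall i, i \in s -> i y.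
  elim=> [|i s IH] h; first by exists 0 => y _ i; rewrite in_nil.
  have [Di ix] := h i (mem_head _ _).
  have [M1 h1] := hD i Di ix.
  have [M2 h2] : exists M, forall y, R M y -> forall i, i \in s -> i y.
    by apply: IH => j js; apply: h; rewrite inE js orbT.
  exists (maxn M1 M2) => y Ry j; rewrite inE => /orP [/eqP ->|js].
    by apply: h1; exact: mono (leq_maxl _ _) _ Ry.
  by apply: h2 _ _ j js; exact: mono (leq_maxr _ _) _ Ry.
have [M hM] := key (finmap.enum_fset F) (fun i iF => conj (set_mem (sF i iF)) (Ax i iF)).
by exists M => y Ry i iF; exact: hM y Ry i iF.
Qed.

Lemma nbhsS {T : topologicalType} {x : T} {P R : set T} : P `<=` R -> nbhs x P -> nbhs x R.
Proof. by move=> PR; apply: filterS. Qed.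

Lemma nbhsI {T : topologicalType} {x : T} {P R : set T} : nbhs x P -> nbhs x R -> nbhs x (P `&` R).
Proof. exact: filterI. Qed.

Lemma cont_by_open {X Y : topologicalType} (f : X -> Y) :
  (forall x V, open V -> V (f x) -> exists U, open U /\ U x /\ (forall y, U y -> V (f y))) ->
  continuous f.
Proof.
move=> h x V; rewrite nbhsE => -[B [oB Bfx] BV].
have [U [oU [Ux hU]]] := h x B oB Bfx.
rewrite nbhs_simpl /=; apply: (@filterS _ _ _ U); first by move=> y /hU /BV.
by apply: open_nbhs_nbhs; split.
Qed.

Section Core.
Variables (G : grp) (Q : set G) (H : G -> bool).
Variable Z : set (Ind G).
Hypotheses (sH : is_subgroup H) (Qsym : symmetric_set Q) (Qgen : generates Q).
Hypotheses (Qfin : finite_set Q) (ZU : URS Z) (ZH : Z H).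
Local Infix "**" := (@gmul G) (at level 40, left associativity).
Local Notation gmulA := (@gmulA G).
Local Notation gmul1 := (@gmul1 G).
Local Notation gmulV := (@gmulV G).
Local Notation e := (gone G).

Definition W k (d : G) := exists w, word_in Q w /\ size w <= k /\ prodw w = d.

Lemma prodw_cat w1 w2 : prodw (w1 ++ w2) = prodw w1 ** prodw w2.
Proof. elim: w1 => [|q w IH] /=; first by rewrite gmul1. by rewrite IH gmulA. Qed.

Lemma word_in_cons q w : word_in Q (q :: w) <-> Q q /\ word_in Q w.
Proof.
split=> [h|[Qq h] r /= [<-//|/h//]]; split; first by apply: h; left.
by move=> r rw; apply: h; right.
Qed.

Lemma word_in_cat w1 w2 : word_in Q (w1 ++ w2) <-> word_in Q w1 /\ word_in Q w2.
Proof.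
elim: w1 => [|q w IH] /=; first by split=> [h|[]//]; split=> // r [].
rewrite !word_in_cons IH; tauto.
Qed.

Lemma prodw_inv w : prodw (rev (map (@ginv G) w)) = ginv (prodw w).
Proof.
elim: w => [|q w IH] /=; first by rewrite ginv1.
by rewrite rev_cons -cats1 prodw_cat IH /= mulg1 ginvM.
Qed.

Lemma word_in_inv w : word_in Q w -> word_in Q (rev (map (@ginv G) w)).
Proof.
elim: w => [|q w IH] //= /word_in_cons [Qq wQ].
rewrite rev_cons -cats1; apply/word_in_cat; split; first exact: IH.
by apply/word_in_cons; split; [exact: Qsym|move=> r []].
Qed.

Lemma W_mono {k k' d} : k <= k' -> W k d -> W k' d.
Proof. by move=> kk [w [wQ [sw <-]]]; exists w; split=> //; split=> //; lia. Qed.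

Lemma W0 k : W k e.
Proof. by exists [::]; split=> //; move=> r []. Qed.

Lemma W_mul {a b x y} : W a x -> W b y -> W (a + b) (x ** y).
Proof.
move=> [w1 [w1Q [s1 <-]]] [w2 [w2Q [s2 <-]]]; exists (w1 ++ w2).
split; first exact/word_in_cat.
by rewrite size_cat prodw_cat; split=> //; lia.
Qed.

Lemma W_inv {a x} : W a x -> W a (ginv x).
Proof.
move=> [w [wQ [sw <-]]]; exists (rev (map (@ginv G) w)).
by rewrite size_rev size_map prodw_inv; split=> //; exact: word_in_inv.
Qed.

Lemma W_Q {q} : Q q -> W 1 q.
Proof.
move=> Qq; exists [:: q]; split; first by apply/word_in_cons; split=> // r [].
by rewrite /= mulg1.
Qed.

Lemma ex_minP (P : nat -> Prop) : (exists n, P n) -> exists n, P n /\ forall m, P m -> n <= m.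
Proof.
move=> ex; have ex' : exists n, `[< P n >] by case: ex => n Pn; exists n; apply/asboolP.
case: (ex_minnP ex') => m /asboolP Pm mn; exists m; split=> // k Pk; apply: mn.
exact/asboolP.
Qed.

Lemma wlen_spec g : W (wlen Q g) g /\ forall k, W k g -> wlen Q g <= k.
Proof.
have ex : exists n, has_word_len Q g n /\ forall m, has_word_len Q g m -> n <= m.
  apply: ex_minP; case: (Qgen g) => w [wQ <-]; exists (size w); exists w; done.
have [[w [wQ [sw pw]]] mn] := epsilon_spec (inhabits 0) _ ex.
rewrite /wlen; split; first by exists w; split=> //; rewrite sw.
move=> k [w' [wQ' [sw' pw']]]; apply: leq_trans (mn _ _) sw'.
by exists w'.
Qed.

Lemma W_wlen g : W (wlen Q g) g. Proof. exact: (wlen_spec g).1. Qed.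
Lemma wlen_min k g : W k g -> wlen Q g <= k. Proof. exact: (wlen_spec g).2. Qed.

Definition cb (a b : G) : bool := H (ginv a ** b).
Lemma ceqE a b : ceq H a b = cb a b. Proof. by []. Qed.
Lemma ceq_refl a : cb a a.
Proof. by rewrite /cb gmulV; exact: (@sub1 _ _ sH). Qed.
Lemma ceq_sym {a b} : cb a b -> cb b a.
Proof. by rewrite /cb -(@subVE _ _ sH) ginvM ginvK. Qed.
Lemma ceq_trans {a b c} : cb a b -> cb b c -> cb a c.
Proof. by rewrite /cb => h1 h2; have := @subM _ _ sH _ _ h1 h2; rewrite -gmulA mulVKg. Qed.
Lemma ceq_mull c a b : cb (c ** a) (c ** b) = cb a b.
Proof. by rewrite /cb ginvM -gmulA mulKg. Qed.
Lemma ceq_congr {a a' b b'} : cb a a' -> cb b b' -> cb a b = cb a' b'.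
Proof.
move=> h1 h2; apply/idP/idP => h.
  exact: ceq_trans (ceq_trans (ceq_sym h1) h) h2.
exact: ceq_trans (ceq_trans h1 h) (ceq_sym h2).
Qed.

Definition T (p : G) : G -> bool := conj_sub p H.
Lemma T_sub p : is_subgroup (T p). Proof. exact: conj_subgroup. Qed.

Lemma ceqT a b p : cb (a ** p) (b ** p) = T p (ginv a ** b).
Proof. by rewrite /cb /T /conj_sub ginvM !gmulA. Qed.

Lemma T_mul g p d : T (g ** p) d = T p (ginv g ** (d ** g)).
Proof. by rewrite /T /conj_sub ginvM !gmulA. Qed.

Lemma inballE n p v : inball Q H n p v <-> exists u, W n u /\ ceq H (u ** p) v.
Proof.
split=> [[w [wQ [sw c]]]|[u [[w [wQ [sw <-]]] c]]]; last by exists w.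
by exists (prodw w); split=> //; exists w.
Qed.

Definition agree k (A B : G -> bool) := forall d, W k d -> A d = B d.
Lemma agree_refl k A : agree k A A. Proof. by []. Qed.
Lemma agree_sym {k A B} : agree k A B -> agree k B A.
Proof. by move=> h d /h ->. Qed.
Lemma agree_trans {k A B C} : agree k A B -> agree k B C -> agree k A C.
Proof. by move=> h1 h2 d Wd; rewrite h1 // h2. Qed.
Lemma agree_mono {k k' A B} : k <= k' -> agree k' A B -> agree k A B.
Proof. by move=> kk h d Wd; apply: h; exact: W_mono kk Wd. Qed.

Lemma split_word {w : seq G} {n} : size w <= n.*2.+1 ->
  exists w1 w2, w = w1 ++ w2 /\ size w1 <= n /\ size w2 <= n.+1.
Proof.
move=> sw; exists (take n w), (drop n w); rewrite cat_take_drop; split=> //.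
rewrite size_take size_drop; split; first by case: ifP => //; lia.
lia.
Qed.

Lemma iso_agree n p p' : ball_iso Q H n p p' -> agree n.*2.+1 (T p) (T p').
Proof.
move=> [phi [h1 [h2 [h3 [h4 h5]]]]].
have inb : forall u, W n u -> inball Q H n p (u ** p).
  by move=> u Wu; apply/inballE; exists u; split=> //; exact: ceq_refl.
have step1 : forall u, W n u -> cb (phi (u ** p)) (u ** p').
  move=> _ [w [wQ [sw <-]]]; elim: w wQ sw => [|q w IH] wQ sw /=.
    by rewrite !gmul1.
  have [Qq wQ'] := iffLR (word_in_cons q w) wQ.
  have sw' : size w <= n by move: sw => /=; lia.
  have Wu : W n (prodw w) by exists w.
  have Wqu : W n (q ** prodw w) by exists (q :: w).
  have i2 : inball Q H n p (q ** (prodw w ** p)) by rewrite gmulA; exact: inb.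
  have := iffLR (h5 q _ _ Qq (inb _ Wu) i2) (ceq_refl _).
  move=> hq; rewrite -!gmulA; apply: ceq_trans (ceq_sym hq) _.
  by rewrite ceq_mull; exact: IH.
move=> _ [w [wQ [sw <-]]].
have [w1 [w2 [ew [s1 s2]]]] := split_word sw.
rewrite ew in wQ *; have [wQ1 wQ2] := iffLR (word_in_cat _ _) wQ; clear wQ.
have Wu1 : W n (prodw w1) by exists w1.
case: w2 ew wQ2 s2 => [|q w3] ew wQ2 s2.
  rewrite cats0.
  have ee : forall r, T r (prodw w1) = cb (e ** r) (prodw w1 ** r).
    by move=> r; rewrite ceqT ginv1 gmul1.
  rewrite !ee -(ceq_congr (step1 _ (W0 n)) (step1 _ Wu1)).
  by apply/idP/idP => /(h2 _ _ (inb _ (W0 n)) (inb _ Wu1)).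
have [Qq wQ3] := iffLR (word_in_cons q w3) wQ2.
have Wu3 : W n (prodw w3) by exists w3; split=> //; split=> //; move: s2 => /=; lia.
have Wi1 : W n (ginv (prodw w1)) by exact: W_inv.
rewrite prodw_cat /=.
have ee : forall r, T r (prodw w1 ** (q ** prodw w3)) =
   cb (q ** (prodw w3 ** r)) (ginv (prodw w1) ** r).
  move=> r; rewrite [in RHS]gmulA ceqT -ginvM (@subVE _ _ (T_sub r)) //.
have c1 : cb (q ** phi (prodw w3 ** p)) (q ** (prodw w3 ** p')).
  by rewrite ceq_mull; exact: step1.
rewrite !ee -(ceq_congr c1 (step1 _ Wi1)).
by apply/idP/idP => /(h5 q _ _ Qq (inb _ Wu3) (inb _ Wi1)).
Qed.

Lemma agree_iso n p p' : agree n.*2.+1 (T p) (T p') -> ball_iso Q H n p p'.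
Proof.
move=> ag.
pose pick v := epsilon (inhabits e) (fun u => W n u /\ cb (u ** p) v).
have pickP : forall v, inball Q H n p v -> W n (pick v) /\ cb (pick v ** p) v.
  by move=> v /inballE ex; exact: (epsilon_spec _ _ ex).
have inb : forall u, W n u -> inball Q H n p (u ** p).
  by move=> u Wu; apply/inballE; exists u; split=> //; exact: ceq_refl.
have agT : forall a b i j, W i a -> W j b -> i + j <= n.*2.+1 ->
    T p (ginv a ** b) = T p' (ginv a ** b).
  move=> a b i j Wa Wb ij; apply: ag; exact: W_mono ij (W_mul (W_inv Wa) Wb).
exists (fun v => pick v ** p'); split; [|split; [|split; [|split]]].
- move=> v /pickP [Wv _]; apply/inballE; exists (pick v); split=> //; exact: ceq_refl.
- move=> v w /pickP [Wv cv] /pickP [Ww cw]; rewrite !ceqE.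
  rewrite -(ceq_congr cv cw) !ceqT (agT _ _ _ _ Wv Ww) //; lia.
- move=> v' /inballE [u [Wu cu]]; exists (u ** p); split; first exact: inb.
  have [Wv cv] := pickP _ (inb _ Wu).
  rewrite ceqE; apply: ceq_trans _ cu; rewrite ceqT -(agT _ _ _ _ Wv Wu) -?ceqT //; lia.
- have [W0' c0] := pickP p (eq_ind _ (fun z => inball Q H n p z) (inb _ (W0 n)) _ (gmul1 p)).
  rewrite ceqE -{2}(gmul1 p') ceqT -(agT _ _ _ _ W0' (W0 n)) -?ceqT ?gmul1 //; lia.
- move=> q v w Qq /pickP [Wv cv] /pickP [Ww cw].
  have cqv : cb (q ** (pick v ** p)) (q ** v) by rewrite ceq_mull.
  rewrite !ceqE -(ceq_congr cqv cw) !gmulA !ceqT.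
  rewrite (agT _ _ _ _ (W_mul (W_Q Qq) Wv) Ww) //; lia.
Qed.

Lemma bcls_agree n p : bcls Q H n p = [set r | agree n.*2.+1 (T p) (T r)].
Proof. by apply/seteqP; split=> r /=; [exact: iso_agree|exact: agree_iso]. Qed.

Lemma bcls_eq n p r : bcls Q H n p = bcls Q H n r <-> agree n.*2.+1 (T p) (T r).
Proof.
rewrite !bcls_agree; split=> [E|ag].
  have : [set r0 | agree n.*2.+1 (T r) (T r0)] r by exact: agree_refl.
  by rewrite -E.
apply/seteqP; split=> s /=; first exact: agree_trans (agree_sym ag).
exact: agree_trans ag.
Qed.

Local Notation X := (GH0 G Q H).
Local Notation pr := xrep.

Lemma xs_pr (x : X) n : xs x n = bcls Q H n (pr x n).
Proof.
have [p [_ E]] := @xs_ok _ _ _ x n.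
exact: (epsilon_spec (inhabits e) (fun p => xs x n = bcls Q H n p) (ex_intro _ p E)).
Qed.

Lemma compat1 (x : X) n : agree n.*2.+1 (T (pr x n.+1)) (T (pr x n)).
Proof.
have [p [E1 E0]] := @xs_ok _ _ _ x n.
have a1 : agree (n.+1).*2.+1 (T (pr x n.+1)) (T p) by apply/bcls_eq; rewrite -xs_pr.
have a0 : agree n.*2.+1 (T (pr x n)) (T p) by apply/bcls_eq; rewrite -xs_pr.
have le : n.*2.+1 <= (n.+1).*2.+1 by lia.
exact: agree_trans (agree_mono le a1) (agree_sym a0).
Qed.

Lemma compat (x : X) {n m} : n <= m -> agree n.*2.+1 (T (pr x m)) (T (pr x n)).
Proof.
elim: m => [|m IH]; first by rewrite leqn0 => /eqP ->; exact: agree_refl.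
rewrite leq_eqVlt => /orP [/eqP ->|lt]; first exact: agree_refl.
have le : n.*2.+1 <= m.*2.+1 by lia.
exact: agree_trans (agree_mono le (compat1 x m)) (IH lt).
Qed.

Definition Kx (x : X) : G -> bool := fun d => T (pr x (wlen Q d)) d.

Lemma Kx_agree (x : X) n : agree n.*2.+1 (Kx x) (T (pr x n)).
Proof.
move=> d Wd; rewrite /Kx.
have W1 : W (wlen Q d).*2.+1 d by apply: W_mono (W_wlen d); lia.
rewrite -(compat x (leq_maxr n (wlen Q d)) d W1).
have hh := compat x (leq_maxl n (wlen Q d)) d Wd.
exact: hh.
Qed.

Lemma xs_iff (x : X) n r : xs x n = bcls Q H n r <-> agree n.*2.+1 (Kx x) (T r).
Proof.
rewrite xs_pr bcls_eq; split=> h; first exact: agree_trans (Kx_agree x n) h.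
exact: agree_trans (agree_sym (Kx_agree x n)) h.
Qed.

Lemma GH0_ext (x y : X) : xs x = xs y -> x = y.
Proof.
case: x => f pf; case: y => g pg /= E; subst g; congr MkGH0; exact: Prop_irrelevance.
Qed.

Lemma Kx_inj (x y : X) : (forall n, agree n.*2.+1 (Kx x) (Kx y)) -> x = y.
Proof.
move=> h; apply: GH0_ext; apply/funext => n; rewrite (xs_pr y n); apply/xs_iff.
exact: agree_trans (h n) (Kx_agree y n).
Qed.

Lemma Kx_inj' (x y : X) : Kx x = Kx y -> x = y.
Proof. by move=> E; apply: Kx_inj => n; rewrite E; exact: agree_refl. Qed.

Lemma cyl_iff (x y : X) N : xs y N = xs x N <-> agree N.*2.+1 (Kx y) (Kx x).
Proof.
rewrite (xs_pr x N) xs_iff; split=> h.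
  exact: agree_trans h (agree_sym (Kx_agree x N)).
exact: agree_trans h (Kx_agree x N).
Qed.

Lemma Kx_sub (x : X) : is_subgroup (Kx x).
Proof.
split; first exact: (@sub1 _ _ (T_sub _)).
move=> a b Ka Kb; set n := wlen Q a + wlen Q b.
have ag := Kx_agree x n.
have Wa : W n.*2.+1 a by apply: W_mono (W_wlen a); lia.
have Wb : W n.*2.+1 b by apply: W_mono (W_wlen b); lia.
have Wab : W n.*2.+1 (a ** ginv b).
  by apply: W_mono (W_mul (W_wlen a) (W_inv (W_wlen b))); lia.
rewrite ag //; rewrite ag // in Ka; rewrite ag // in Kb.
exact: (T_sub _).2.
Qed.

Lemma xs_gact g (x : X) n : xs (gact g x) n = bcls Q H n (g ** pr x (n + wlen Q g)).
Proof.
rewrite /gact /toGH0; case: pselect => [pf|nf] //=.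
exfalso; apply: nf => m; exists (g ** pr x (m.+1 + wlen Q g)); split=> //.
apply/bcls_eq => d Wd; rewrite !T_mul.
have Wc : W (m + wlen Q g).*2.+1 (ginv g ** (d ** g)).
  by apply: W_mono (W_mul (W_inv (W_wlen g)) (W_mul Wd (W_wlen g))); lia.
by rewrite (compat x (_ : m + wlen Q g <= m.+1 + wlen Q g) _ Wc).
Qed.

Lemma Kx_gact g (x : X) : Kx (gact g x) = conj_sub g (Kx x).
Proof.
apply/funext => d; set n := wlen Q d.
have ag : agree n.*2.+1 (Kx (gact g x)) (T (g ** pr x (n + wlen Q g))).
  by apply/xs_iff; exact: xs_gact.
rewrite ag; last by apply: W_mono (W_wlen d); lia.
rewrite T_mul /conj_sub (Kx_agree x (n + wlen Q g)) //.
by apply: W_mono (W_mul (W_inv (W_wlen g)) (W_mul (W_wlen d) (W_wlen g))); lia.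
Qed.

Lemma gact_wd g h (x : X) : Kx x (ginv g ** h) -> gact g x = gact h x.
Proof.
move=> k; apply: Kx_inj'; rewrite !Kx_gact; apply/funext => d; rewrite /conj_sub.
have -> : ginv h ** (d ** h) =
    ginv (ginv g ** h) ** ((ginv g ** (d ** g)) ** (ginv g ** h)).
  by rewrite ginvM ginvK !gmulA !mulgK.
by rewrite (@subJ _ _ (Kx_sub x) _ _ k).
Qed.

Lemma gact1 (x : X) : gact e x = x.
Proof.
by apply: Kx_inj'; rewrite Kx_gact; apply/funext => d; rewrite /conj_sub ginv1 gmul1 mulg1.
Qed.

Lemma gactM g h (x : X) : gact (h ** g) x = gact h (gact g x).
Proof.
by apply: Kx_inj'; rewrite !Kx_gact; apply/funext => d; rewrite /conj_sub ginvM !gmulA.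
Qed.

Local Notation A := (GH G Q H).

Lemma arr_relE (x : X) g y h : arr_rel (x, g) (y, h) <-> x = y /\ Kx x (ginv g ** h).
Proof.
rewrite /arr_rel /=; split=> [[<- [N hN]]|[<- k]]; split=> //.
  set d := ginv g ** h; set n := maxn N (wlen Q d).
  have := hN n (leq_maxl _ _); rewrite ceqE ceqT -/d.
  rewrite -(Kx_agree x n) //; apply: W_mono (W_wlen d); lia.
exists (wlen Q (ginv g ** h)) => n le; rewrite ceqE ceqT -(Kx_agree x n) //.
by apply: W_mono (W_wlen _); lia.
Qed.

Lemma MkGH_ext (S1 S2 : set (X * G)) p1 p2 : S1 = S2 -> MkGH S1 p1 = MkGH S2 p2.
Proof. by move=> E; subst S2; congr MkGH; exact: Prop_irrelevance. Qed.

Lemma acls_eq (x : X) g y h : acls (x, g) = acls (y, h) <-> x = y /\ Kx x (ginv g ** h).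
Proof.
split=> [E|[<- k]].
  have : aset (acls (y, h)) (y, h).
    by apply/arr_relE; split=> //; rewrite gmulV; exact: (@sub1 _ _ (Kx_sub y)).
  by rewrite -E => /arr_relE.
apply: MkGH_ext; apply/funext => -[z f]; apply/propext; rewrite !arr_relE.
split=> [[<- k2]|[<- k2]]; split=> //.
  exact: (@subT _ _ (Kx_sub x) _ _ _ (@subC _ _ (Kx_sub x) _ _ k) k2).
exact: (@subT _ _ (Kx_sub x) _ _ _ k k2).
Qed.

Lemma aset_arep (a : A) : aset a = arr_rel (arep a).
Proof.
rewrite /arep; case: a => S [a0 E] /=.
exact: (epsilon_spec _ (fun a => S = arr_rel a) (ex_intro _ a0 E)).
Qed.

Lemma acls_arep (a : A) : acls (arep a) = a.
Proof.
case: a => S pf; rewrite /acls; apply: MkGH_ext.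
by have /= E := aset_arep (MkGH S pf); rewrite -E.
Qed.

Lemma arrowP (a : A) : exists x g, a = acls (x, g).
Proof. by exists (arep a).1, (arep a).2; rewrite -surjective_pairing acls_arep. Qed.

Lemma arep_acls (x : X) g :
  (arep (acls (x, g))).1 = x /\ Kx x (ginv g ** (arep (acls (x, g))).2).
Proof.
case E: (arep (acls (x, g))) => [y h] /=.
by have := acls_arep (acls (x, g)); rewrite E => /esym /acls_eq [<- k].
Qed.

Lemma GH_r_acls (x : X) g : GH_r (acls (x, g)) = x.
Proof. by rewrite /GH_r; case: (arep_acls x g). Qed.

Lemma GH_s_acls (x : X) g : GH_s (acls (x, g)) = gact g x.
Proof.
rewrite /GH_s; case: (arep_acls x g) => E k; rewrite E.
exact: (esym (gact_wd _ _ _ k)).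
Qed.

Lemma GH_inv_acls (x : X) g : GH_inv (acls (x, g)) = acls (gact g x, ginv g).
Proof.
rewrite /GH_inv GH_s_acls; case: (arep_acls x g) => _ k.
apply/acls_eq; split=> //; rewrite Kx_gact /conj_sub ginvK mulgKV.
exact: k.
Qed.

Lemma GH_mul_acls (x : X) g h :
  GH_mul (acls (x, g)) (acls (gact g x, h)) = acls (x, h ** g).
Proof.
rewrite /GH_mul GH_r_acls; case: (arep_acls x g) => _ k1.
case: (arep_acls (gact g x) h) => _; rewrite Kx_gact /conj_sub => k2.
apply/acls_eq; split=> //.
set g' := (arep (acls (x, g))).2; set h' := (arep (acls (gact g x, h))).2.
apply: (@subC _ _ (Kx_sub x)).
have -> : ginv (h ** g) ** (h' ** g') =
    (ginv g ** ((ginv h ** h') ** g)) ** (ginv g ** g').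
  by rewrite ginvM !gmulA mulgK.
exact: (@subM _ _ (Kx_sub x) _ _ k2 k1).
Qed.

Lemma agree_nbhs (K : Ind G) k : nbhs K [set f : Ind G | agree k f K].
Proof.
have [X EX] := (@finite_fsetP (gT G) Q).1 Qfin.
suff S : forall k c, nbhs K [set f : Ind G | forall w, word_in Q w -> size w <= k ->
    f (prodw w ** c) = K (prodw w ** c)].
  apply: nbhsS (S k e) => f hf d [w [wQ [sw <-]]].
  by have := hf w wQ sw; rewrite mulg1.
elim=> [|j IH] c.
  apply: nbhsS (proj_nbhs _ K (e ** c)) => f hf [|q w] wQ //= sw.
pose P := fun q : gT G => [set f : Ind G | forall w, word_in Q w ->
    size w <= j -> f (prodw w ** (q ** c)) = K (prodw w ** (q ** c))].
have B := @filter_bigI (Ind G) (gT G) X P (nbhs (K : Ind G)) (nbhs_filter K) (fun q _ => IH (q ** c)).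
apply: nbhsS (nbhsI (proj_nbhs _ K (e ** c)) B) => f [h0 hq] w wQ sw.
case/lastP: w wQ sw => [|w q] wQ sw; first exact: h0.
rewrite -cats1 in wQ sw *; have [wQ1 wQ2] := iffLR (word_in_cat _ _) wQ.
have Qq : Q q by apply: wQ2; left.
rewrite prodw_cat /= mulg1 -gmulA.
apply: (hq q _ w wQ1); first by move: Qq; rewrite EX.
by move: sw; rewrite size_cat /=; lia.
Qed.

Lemma agree_open (K : Ind G) k : open [set f : Ind G | agree k f K].
Proof.
rewrite openE => f hf; rewrite /interior.
have -> : [set f : Ind G | agree k f K] = [set g : Ind G | agree k g f].
  apply/seteqP; split=> g /= h; first exact: agree_trans h (agree_sym hf).
  exact: agree_trans h hf.
exact: agree_nbhs.
Qed.

Definition cyl (x : X) M := [set y : X | agree M.*2.+1 (Kx y) (Kx x)].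

Lemma cyl_open (x : X) M : open (cyl x M).
Proof.
have -> : cyl x M = [set y | xs y M = xs x M].
  by apply/seteqP; split=> y /= /cyl_iff.
apply: sub_open_GH0; exists M, (xs x M); split=> //.
by exists (pr x M); exact: xs_pr.
Qed.

Lemma cyl_refl (x : X) M : cyl x M x. Proof. exact: agree_refl. Qed.

Lemma cyl_mono (x : X) m n : m <= n -> cyl x n `<=` cyl x m.
Proof. by move=> le y; apply: agree_mono; lia. Qed.

Lemma nbhs_GH0 {U : set X} {x : X} : open U -> U x -> exists M, cyl x M `<=` U.
Proof.
move=> oU Ux; have [A [fA [Ax AU]]] := @open_GH0 _ _ _ U oU x Ux.
have [M hM] : exists M, cyl x M `<=` A.
  apply: (@finI_small _ _ (cyl x) x _ _ A fA Ax); first exact: cyl_mono.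
  move=> i [N [c [_ ->]]] /= xi; exists N => y /cyl_iff; rewrite xi; done.
by exists M => y /hM /AU.
Qed.

Lemma Kx_cont : continuous (fun x : X => (Kx x : Ind G)).
Proof.
move=> x; apply: (@ptws_cvg G _ (fmap_filter _ (nbhs_filter x))) => d.
rewrite /= nbhs_simpl /=.
apply: (@filterS _ _ _ (cyl x (wlen Q d))).
  move=> y hy; apply: hy; apply: W_mono (W_wlen d); lia.
by apply: open_nbhs_nbhs; split; [exact: cyl_open|exact: cyl_refl].
Qed.

Lemma T_Z p : Z (T p).
Proof. by have [_ [_ [_ [hinv _]]]] := ZU; exact: hinv. Qed.

Lemma Kx_Z (x : X) : Z (Kx x).
Proof.
have [_ [_ [[C [cC ZE]] _]]] := ZU.
rewrite ZE; split; last exact: Kx_sub.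
apply: (@closed_cvg nat (Ind G) \oo eventually_filter (fun n => (T (pr x n) : Ind G)) C cC).
  by apply: nearW => n; have := T_Z (pr x n); rewrite ZE => -[].
apply: (@ptws_cvg G _ (fmap_filter _ eventually_filter)) => d; apply: (@eventually_ge _ (wlen Q d)) => n le /=.
by rewrite (Kx_agree x n) //; apply: W_mono (W_wlen d); lia.
Qed.

Lemma Z_dense (K K' : Ind G) k : Z K -> Z K' ->
  exists g, agree k (conj_sub g K) K'.
Proof.
move=> ZK ZK'; have [_ [_ [_ [_ hd]]]] := ZU.
have := hd K ZK K' ZK' _ (agree_nbhs K' k).
by move=> [_ [[g _ <-] ag]]; exists g.
Qed.

Lemma Kx_onto {K : Ind G} : Z K -> exists x : X, Kx x = K.
Proof.
move=> ZK.
pose r n := epsilon (inhabits e) (fun g => agree (n.+1).*2.+1 (T g) K).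
have rP : forall n, agree (n.+1).*2.+1 (T (r n)) K.
  by move=> n; apply: (epsilon_spec (inhabits e) (fun g => agree (n.+1).*2.+1 (T g) K));
     exact: Z_dense ZH ZK.
have pf : forall n, exists p, bcls Q H n.+1 (r n.+1) = bcls Q H n.+1 p /\
    bcls Q H n (r n) = bcls Q H n p.
  move=> n; exists (r n.+1); split=> //; apply/bcls_eq.
  apply: agree_trans (agree_mono _ (rP n)) (agree_sym (agree_mono _ (rP n.+1))); lia.
exists (MkGH0 (fun n => bcls Q H n (r n)) pf); apply/funext => d.
set n := wlen Q d.
have ag := (xs_iff (MkGH0 (fun n => bcls Q H n (r n)) pf) n (r n)).1 erefl.
rewrite ag; last by apply: W_mono (W_wlen d); lia.
by apply: rP; apply: W_mono (W_wlen d); lia.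
Qed.

Lemma Kx_open (U : set X) : open U ->
  exists V : set (Ind G), open V /\ (fun x => (Kx x : Ind G)) @` U = V `&` Z.
Proof.
move=> oU.
exists [set f : Ind G | exists x M, U x /\ cyl x M `<=` U /\ agree M.*2.+1 f (Kx x)].
split.
  rewrite openE => f [x [M [Ux [sU ag]]]]; rewrite /interior.
  apply: (@filterS _ _ _ [set g : Ind G | agree M.*2.+1 g (Kx x)]).
    by move=> g hg; exists x, M.
  by apply: open_nbhs_nbhs; split; [exact: agree_open|].
apply/seteqP; split=> f.
  move=> [x Ux <-]; split; last exact: Kx_Z.
  have [M hM] := nbhs_GH0 oU Ux.
  by exists x, M; split=> //; split=> //; exact: agree_refl.
move=> [[x [M [Ux [sU ag]]]] Zf].
have [y Ey] := Kx_onto Zf; exists y => //.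
by apply: sU; rewrite /cyl /= Ey.
Qed.

Definition Bas M (x : X) g := [set a : A | exists y, a = acls (y, g) /\ cyl x M y].

Lemma Bas_open M x g : wlen Q g <= M -> open (Bas M x g).
Proof.
move=> lg.
have -> : Bas M x g = [set a | exists y, a = acls (y, g) /\ xs y M = xs x M].
  by apply/seteqP; split=> a [y [-> h]]; exists y; split=> //; apply/cyl_iff.
apply: sub_open_GH; exists M, (xs x M), g; split; last by split.
by exists (pr x M); exact: xs_pr.
Qed.

Lemma Bas_in M x g : Bas M x g (acls (x, g)).
Proof. by exists x; split=> //; exact: cyl_refl. Qed.

Lemma Bas_nbhs M x g : wlen Q g <= M -> nbhs (acls (x, g)) (Bas M x g).
Proof. by move=> lg; apply: open_nbhs_nbhs; split; [exact: Bas_open|exact: Bas_in]. Qed.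

Lemma nbhs_GH {V : set A} {x g} : open V -> V (acls (x, g)) ->
  exists M, forall y, cyl x M y -> V (acls (y, g)).
Proof.
move=> oV Va; have [B [fB [Bx BV]]] := @open_GH _ _ _ V oV _ Va.
have [M hM] : exists M, Bas M x g `<=` B.
  apply: (@finI_small _ _ (fun M => Bas M x g) (acls (x, g)) _ _ B fB Bx).
    by move=> m n le a [y [-> h]]; exists y; split=> //; exact: cyl_mono le _ h.
  move=> i [N [c [g' [cE [lg' ->]]]]] /= [z [Ez zc]].
  have [zx k] := iffLR (acls_eq _ _ _ _) Ez; subst z.
  exists (N + wlen Q g) => a [y [-> hy]]; exists y; split.
    apply/acls_eq; split=> //; rewrite (hy _ _) //.
    by apply: W_mono (W_mul (W_inv (W_wlen g)) (W_mono lg' (W_wlen g'))); lia.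
  rewrite -zc; apply/cyl_iff; apply: agree_mono _ hy; lia.
by exists M => y hy; apply: BV; apply: hM; exists y.
Qed.

Lemma cyl_gact (x y : X) g M : cyl x (M + wlen Q g) y -> cyl (gact g x) M (gact g y).
Proof.
move=> h d Wd; rewrite !Kx_gact /conj_sub; apply: h.
by apply: W_mono (W_mul (W_inv (W_wlen g)) (W_mul Wd (W_wlen g))); lia.
Qed.

Lemma r_cont : continuous (@GH_r G Q H).
Proof.
apply: cont_by_open => a V oV; case: (arrowP a) => x [g ->]; rewrite GH_r_acls => Vx.
have [M hM] := nbhs_GH0 oV Vx.
exists (Bas (maxn M (wlen Q g)) x g); split; first exact/Bas_open/leq_maxr.
split; first exact: Bas_in.
move=> b [y [-> hy]]; rewrite GH_r_acls; apply: hM; exact: cyl_mono (leq_maxl _ _) _ hy.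
Qed.

Lemma s_cont : continuous (@GH_s G Q H).
Proof.
apply: cont_by_open => a V oV; case: (arrowP a) => x [g ->]; rewrite GH_s_acls => Vx.
have [M hM] := nbhs_GH0 oV Vx.
exists (Bas (maxn (M + wlen Q g) (wlen Q g)) x g); split; first exact/Bas_open/leq_maxr.
split; first exact: Bas_in.
move=> b [y [-> hy]]; rewrite GH_s_acls; apply: hM; apply: cyl_gact.
exact: cyl_mono (leq_maxl _ _) _ hy.
Qed.

Lemma u_cont : continuous (@GH_u G Q H).
Proof.
apply: cont_by_open => x V oV; rewrite /GH_u => Vx.
have [M hM] := nbhs_GH oV Vx.
exists (cyl x M); split; first exact: cyl_open.
by split; [exact: cyl_refl|move=> y hy; exact: hM].
Qed.

Lemma inv_cont : continuous (@GH_inv G Q H).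
Proof.
apply: cont_by_open => a V oV; case: (arrowP a) => x [g ->]; rewrite GH_inv_acls => Va.
have [M hM] := nbhs_GH oV Va.
exists (Bas (maxn (M + wlen Q g) (wlen Q g)) x g); split; first exact/Bas_open/leq_maxr.
split; first exact: Bas_in.
move=> b [y [-> hy]]; rewrite GH_inv_acls; apply: hM; apply: cyl_gact.
exact: cyl_mono (leq_maxl _ _) _ hy.
Qed.

Lemma mul_cont : {within [set gh : A * A | GH_s gh.1 = GH_r gh.2],
  continuous (fun gh : A * A => GH_mul gh.1 gh.2)}.
Proof.
apply/subspace_continuousP => -[a b] /= Dab.
case: (arrowP a) Dab => x [g ->]; case: (arrowP b) => y [h ->].
rewrite GH_s_acls GH_r_acls => Dab; subst y.
rewrite /from_subspace /= GH_mul_acls => V; rewrite nbhsE => -[B [oB Bx] BV].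
have [M hM] := nbhs_GH oB Bx.
rewrite /= nbhs_simpl /=.
exists (Bas (maxn M (wlen Q g)) x g, Bas (wlen Q h) (gact g x) h).
  by split; apply: Bas_nbhs => //; exact: leq_maxr.
move=> [a' b'] /= [[y [Ea hy]] [z [Eb hz]]]; subst a' b' => /=.
rewrite GH_s_acls GH_r_acls => E; subst z.
apply: BV; rewrite GH_mul_acls; apply: hM; exact: cyl_mono (leq_maxl _ _) _ hy.
Qed.

Lemma GH_groupoid : topological_groupoid (@GH_r G Q H) GH_s GH_u GH_inv GH_mul.
Proof.
split.
  by move=> x; rewrite /GH_u GH_r_acls GH_s_acls gact1.
split.
  move=> a b; case: (arrowP a) => x [g ->]; case: (arrowP b) => y [h ->].
  rewrite GH_s_acls GH_r_acls => <-.
  by rewrite GH_mul_acls !GH_r_acls !GH_s_acls gactM.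
split.
  move=> a b c; case: (arrowP a) => x [g ->]; case: (arrowP b) => y [h ->].
  case: (arrowP c) => z [k ->]; rewrite !GH_s_acls !GH_r_acls => E1 E2; subst y z.
  rewrite (GH_mul_acls x g h) (GH_mul_acls (gact g x) h k) -gactM.
  by rewrite !GH_mul_acls gmulA.
split.
  move=> a; case: (arrowP a) => x [g ->]; rewrite GH_r_acls GH_s_acls /GH_u.
  split; last by rewrite GH_mul_acls gmul1.
  by have := GH_mul_acls x e g; rewrite gact1 mulg1 => ->.
split.
  move=> a; case: (arrowP a) => x [g ->]; rewrite GH_inv_acls !GH_r_acls !GH_s_acls.
  split=> //; split; first by rewrite -gactM gmulV gact1.
  split; first by rewrite GH_mul_acls gmulV.
  by have := GH_mul_acls (gact g x) (ginv g) g; rewrite -gactM gmulV gact1 mulgV => ->.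
split; first exact: r_cont.
split; first exact: s_cont.
split; first exact: u_cont.
split; first exact: inv_cont.
exact: mul_cont.
Qed.

Lemma r_local_homeo : local_homeo (@GH_r G Q H).
Proof.
move=> a; case: (arrowP a) => x [g ->]; set M := wlen Q g.
exists (Bas M x g).
have rB : GH_r @` Bas M x g = cyl x M.
  apply/seteqP; split=> [_ [b [y [-> hy]] <-]|y hy]; first by rewrite GH_r_acls.
  by exists (acls (y, g)); [exists y|rewrite GH_r_acls].
split; first exact: Bas_open.
split; first exact: Bas_in.
split; first by rewrite rB; exact: cyl_open.
split; first by move=> a1 a2 [y1 [-> _]] [y2 [-> _]]; rewrite !GH_r_acls => ->.
split; first exact: continuous_subspaceT r_cont.
move=> V oV VU; rewrite openE => y [b Vb <-].
have [y' [Eb _]] := VU b Vb; subst b; rewrite GH_r_acls.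
have [M' hM'] := nbhs_GH oV Vb.
rewrite /interior; apply: nbhsS (open_nbhs_nbhs (conj (cyl_open y' M') (cyl_refl _ _))).
by move=> z hz; exists (acls (z, g)); [exact: hM'|exact: GH_r_acls].
Qed.

Lemma Kx_neq {x y : X} : x <> y -> exists d, Kx x d <> Kx y d.
Proof.
move=> nxy; case: (pselect (exists d, Kx x d <> Kx y d)) => // nd.
exfalso; apply: nxy; apply: Kx_inj'; apply/funext => d.
by case: (pselect (Kx x d = Kx y d)) => // ne; exfalso; apply: nd; exists d.
Qed.

Lemma GH0_td : totally_disconnected [set: X].
Proof.
apply: zero_dimension_totally_disconnected => x y /eqP nxy.
have [d hd] := Kx_neq nxy; set N := wlen Q d.
have Wd : W N.*2.+1 d by apply: W_mono (W_wlen d); lia.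
exists (cyl x N); split.
- split; first exact: cyl_open.
  rewrite -[cyl x N]setCK; apply: open_closedC; rewrite openE => z nz.
  rewrite /interior; apply: nbhsS (open_nbhs_nbhs (conj (cyl_open z N) (cyl_refl z N))).
  move=> w hw hwx; apply: nz; exact: agree_trans (agree_sym hw) hwx.
- exact: cyl_refl.
- by move=> h; apply: hd; rewrite (h d Wd).
Qed.

Lemma GH_hausdorff : hausdorff_space A.
Proof.
rewrite open_hausdorff => a b /eqP nab.
case: (arrowP a) nab => x [g ->]; case: (arrowP b) => y [h ->] nab.
have [N hN] : exists N, x <> y -> ~ agree N.*2.+1 (Kx x) (Kx y).
  case: (pselect (x = y)) => [->|nxy]; first by exists 0.
  have [d hd] := Kx_neq nxy; exists (wlen Q d) => _ ag; apply: hd; apply: ag.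
  by apply: W_mono (W_wlen d); lia.
set M := maxn (maxn (wlen Q g) (wlen Q h)) (maxn N (wlen Q (ginv g ** h))).
exists (Bas M x g, Bas M y h).
  by split; rewrite in_setE; exact: Bas_in.
split; [apply: Bas_open; lia|apply: Bas_open; lia|].
apply/eqP; apply/seteqP; split=> // c [[z [-> hz]] [z' [E hz']]].
have [ezz k] := iffLR (acls_eq _ _ _ _) E; subst z'.
have agxy : agree M.*2.+1 (Kx x) (Kx y) := agree_trans (agree_sym hz) hz'.
case: (pselect (x = y)) => [exy|nxy]; last first.
  by apply: (hN nxy); apply: agree_mono agxy; lia.
subst y; apply: nab; apply/acls_eq; split=> //.
rewrite -(hz _ _) //; apply: W_mono (W_wlen _); lia.
Qed.

Lemma GH_minimal : minimal_groupoid (@GH_r G Q H) GH_s.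
Proof.
move=> x; apply/seteqP; split=> // y _ B; rewrite nbhsE => -[B' [oB' yB'] B'B].
have [M hM] := nbhs_GH0 oB' yB'.
have [g ag] := Z_dense _ _ M.*2.+1 (Kx_Z x) (Kx_Z y).
exists (gact g x); split.
  by exists (acls (x, g)); [exact: GH_r_acls|exact: GH_s_acls].
by apply: B'B; apply: hM; rewrite /cyl /= Kx_gact.
Qed.

Lemma GH0_homeo : homeomorphic_to_subspace X (Ind G) Z.
Proof.
exists (fun x => Kx x : Ind G); split; first by move=> x y; exact: Kx_inj'.
split; last by split; [exact: Kx_cont|exact: Kx_open].
apply/seteqP; split=> [_ [x _ <-]|K ZK]; first exact: Kx_Z.
by have [x Ex] := Kx_onto ZK; exists x.
Qed.

Lemma main_sec :
  ample_groupoid (@GH_r G Q H) (@GH_s G Q H) (@GH_u G Q H)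
                 (@GH_inv G Q H) (@GH_mul G Q H) /\
  minimal_groupoid (@GH_r G Q H) (@GH_s G Q H) /\
  hausdorff_space (GH G Q H) /\
  homeomorphic_to_subspace (GH0 G Q H) (Ind G) Z.
Proof.
split; first by split; [split; [exact: GH_groupoid|exact: r_local_homeo]|exact: GH0_td].
split; first exact: GH_minimal.
by split; [exact: GH_hausdorff|exact: GH0_homeo].
Qed.

End Core.

Theorem proposition3p1 (G : grp) (Q : set G) (Z : set (Ind G)) (H : Ind G) :
  finite_set Q -> symmetric_set Q -> generates Q ->
  URS Z -> Z H ->
  ample_groupoid (@GH_r G Q H) (@GH_s G Q H) (@GH_u G Q H)
                 (@GH_inv G Q H) (@GH_mul G Q H) /\
  minimal_groupoid (@GH_r G Q H) (@GH_s G Q H) /\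
  hausdorff_space (GH G Q H) /\
  homeomorphic_to_subspace (GH0 G Q H) (Ind G) Z.
Proof.
move=> Qfin Qsym Qgen ZU ZH.
have sH : is_subgroup H by have [_ [ZS _]] := ZU; exact: ZS.
by apply: main_sec.
Qed.
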